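(* Let $n\ge 2$, let $p \in B_n$, and let $C = C_{B_{n+1}}\big(d(p)\, \sigma_1\, \delta_{n+1}^{-1}\big)$ be the centralizer of $d(p)\sigma_1\delta_{n+1}^{-1}$ in $B_{n+1}$. Define $$c_1 = \Delta_{n+1}^2,\qquad c_2 = d(p)\, \sigma_2^{-1} \cdots \sigma_n^{-1},\qquad c_3 = \sigma_1 \sigma_2\cdots \sigma_{n-1}\sigma_n^2 \sigma_{n-1}\cdots \sigma_{1}.$$ Then $c_1,c_2,c_3 \in C$, and the subgroup $C' = \langle c_1,c_2,c_3\rangle$ of $B_{n+1}$ is abelian and hence has polynomial growth.
   Context: $B_m$ denotes the braid group on $m$ strands with Artin generators $\sigma_1,\dots,\sigma_{m-1}$ and relations $\sigma_i\sigma_j\sigma_i=\sigma_j\sigma_i\sigma_j$ for $|i-j|=1$, $\sigma_i\sigma_j=\sigma_j\sigma_i$ for $|i-j|>1$; $B_\infty$ is the braid group on generators $\sigma_1,\sigma_2,\dots$ with the same relations, and $B_m\subset B_{m+1}\subset B_\infty$ via the generators. The shift $d$ is the monomorphism of $B_\infty$ induced by $\sigma_{i_1}^{\varepsilon_1}\cdots\sigma_{i_k}^{\varepsilon_k}\mapsto \sigma_{i_1+1}^{\varepsilon_1}\cdots\sigma_{i_k+1}^{\varepsilon_k}$. In $B_{n+1}$: $\delta_{n+1} = \sigma_{n}\sigma_{n-1}\cdots\sigma_1$ and $\Delta_{n+1} = (\sigma_{n}\cdots\sigma_1)(\sigma_{n}\cdots\sigma_2)\cdots(\sigma_{n})$.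 *)

(* Defs.v *)
From mathcomp Require Import all_boot.
Set Implicit Arguments. Unset Strict Implicit. Unset Printing Implicit Defensive.

(* A letter (i, true) stands for sigma_i, (i, false) for sigma_i^{-1}. *)
Definition letter := (nat * bool)%type.
Definition bword := seq letter.

Definition linv (x : letter) : letter := (x.1, ~~ x.2).
Definition winv (w : bword) : bword := rev (map linv w).

Definition valid (m : nat) (w : bword) : bool := all (fun x => (0 < x.1) && (x.1 < m)) w.

(* Equality in B_m : the congruence on words generated by free cancellation
   and the Artin braid relations among sigma_1 .. sigma_{m-1}. *)
Inductive beq (m : nat) : bword -> bword -> Prop :=
| beq_refl w : beq m w w
| beq_sym u v : beq m u v -> beq m v u
| beq_trans u v w : beq m u v -> beq m v w -> beq m u w
| beq_cat u u' v v' : beq m u u' -> beq m v v' -> beq m (u ++ v) (u' ++ v')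
| beq_free (x : letter) : 0 < x.1 -> x.1 < m -> beq m [:: x; linv x] [::]
| beq_braid (i : nat) : 0 < i -> i.+1 < m ->
    beq m [:: (i, true); (i.+1, true); (i, true)] [:: (i.+1, true); (i, true); (i.+1, true)]
| beq_comm (i j : nat) : 0 < i -> i.+1 < j -> j < m ->
    beq m [:: (i, true); (j, true)] [:: (j, true); (i, true)].

(* shift d : sigma_i^e |-> sigma_{i+1}^e *)
Definition shift (w : bword) : bword := map (fun x => (x.1.+1, x.2)) w.

(* delta_{n+1} = sigma_n sigma_{n-1} ... sigma_1 *)
Definition delta (n : nat) : bword := [seq (i, true) | i <- rev (iota 1 n)].

(* Delta_{n+1} = (sigma_n ... sigma_1)(sigma_n ... sigma_2) ... (sigma_n) *)
Definition Delta (n : nat) : bword :=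
  flatten [seq [seq (i, true) | i <- rev (iota k (n - k).+1)] | k <- iota 1 n].

(* the element d(p) sigma_1 delta_{n+1}^{-1} *)
Definition xelt (n : nat) (p : bword) : bword := shift p ++ [:: (1, true)] ++ winv (delta n).

Definition c1 (n : nat) : bword := Delta n ++ Delta n.
Definition c2 (n : nat) (p : bword) : bword := shift p ++ [seq (i, false) | i <- iota 2 (n - 1)].
(* sigma_1 ... sigma_{n-1} sigma_n^2 sigma_{n-1} ... sigma_1 *)
Definition c3 (n : nat) : bword :=
  [seq (i, true) | i <- iota 1 n] ++ [seq (i, true) | i <- rev (iota 1 n)].

Definition in_centralizer (m : nat) (x c : bword) : Prop :=
  valid m c /\ beq m (c ++ x) (x ++ c).

(* Words in a finite list of generators gens (and their inverses):
   (k, true) = gens_k, (k, false) = gens_k^{-1}; evaluated as braid words. *)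
Definition gen_word (gens : seq bword) (u : seq letter) : bool :=
  all (fun y => y.1 < size gens) u.
Definition geval (gens : seq bword) (u : seq letter) : bword :=
  flatten [seq (if y.2 then nth [::] gens y.1 else winv (nth [::] gens y.1)) | y <- u].

Definition subgroup_abelian (m : nat) (gens : seq bword) : Prop :=
  forall u v, gen_word gens u -> gen_word gens v ->
    beq m (geval gens u ++ geval gens v) (geval gens v ++ geval gens u).

Definition poly_growth (m : nat) (gens : seq bword) : Prop :=
  exists K d : nat, forall r : nat, exists L : seq bword,
    size L <= K * (r.+1) ^ d /\
    forall u, gen_word gens u -> size u <= r ->
      exists2 w, w \in L & beq m (geval gens u) w.

(* Main.v *)
Require Import Defs.
From Stdlib Require Import Setoid Morphisms.
From mathcomp Require Import all_boot zify.
Set Implicit Arguments. Unset Strict Implicit. Unset Printing Implicit Defensive.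

Lemma beq_refl' m : Reflexive (beq m). Proof. exact: beq_refl. Qed.
Lemma beq_sym' m : Symmetric (beq m). Proof. move=> ??; exact: beq_sym. Qed.
Lemma beq_trans' m : Transitive (beq m). Proof. move=> ???; exact: beq_trans. Qed.
Add Parametric Relation m : bword (beq m)
  reflexivity proved by (@beq_refl' m) symmetry proved by (@beq_sym' m)
  transitivity proved by (@beq_trans' m) as beq_rel.
Add Parametric Morphism m : (@cat letter) with signature beq m ==> beq m ==> beq m as cat_mor.
Proof. move=> x y H x' y' H'; exact: beq_cat H H'. Qed.

Definition comm m (a b : bword) := beq m (a ++ b) (b ++ a).

Lemma comm_sym m a b : comm m a b -> comm m b a.
Proof. rewrite /comm => H. apply: beq_sym. exact: H. Qed.

Lemma comm_nil m a : comm m a [::].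
Proof. rewrite /comm cats0; reflexivity. Qed.

Lemma comm_catr m a b c : comm m a b -> comm m a c -> comm m a (b ++ c).
Proof.
rewrite /comm => H1 H2. rewrite catA H1 -catA H2 catA. reflexivity.
Qed.

Lemma comm_catl m a b c : comm m a c -> comm m b c -> comm m (a ++ b) c.
Proof. move=> H1 H2; apply: comm_sym; apply: comm_catr; exact: comm_sym. Qed.

Lemma linvK x : linv (linv x) = x.
Proof. by case: x => i []. Qed.

Lemma winvK w : winv (winv w) = w.
Proof. by rewrite /winv map_rev revK -map_comp (eq_map linvK) map_id. Qed.

Lemma winv_cons x w : winv (x :: w) = winv w ++ [:: linv x].
Proof. by rewrite /winv /= rev_cons cats1. Qed.

Lemma valid_winv m w : valid m (winv w) = valid m w.
Proof. by rewrite /valid /winv all_rev all_map. Qed.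

Lemma inv_r m w : valid m w -> beq m (w ++ winv w) [::].
Proof.
elim: w => [|x w IH] /=; first by reflexivity.
case/andP=> /andP [H1 H2] Hw.
rewrite winv_cons -cat1s !catA -(catA [:: x]) IH /=; last exact: Hw.
exact: beq_free.
Qed.

Lemma inv_l m w : valid m w -> beq m (winv w ++ w) [::].
Proof. by move=> Hw; rewrite -{2}(winvK w); apply: inv_r; rewrite valid_winv. Qed.

Lemma comm_winv m a b : valid m b -> comm m a b -> comm m a (winv b).
Proof.
rewrite /comm => Hb H.
transitivity (winv b ++ (b ++ a) ++ winv b).
  rewrite !catA inv_l //=; reflexivity.
rewrite -H -!catA inv_r // cats0; reflexivity.
Qed.

Lemma comm_beq m a b b' : beq m b b' -> comm m a b' -> comm m a b.
Proof. by rewrite /comm => H1 H2; rewrite H1. Qed.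

Lemma comm_gen m a (P : pred nat) w :
  (forall i, 0 < i -> i < m -> P i -> comm m a [:: (i, true)]) ->
  all (fun y : letter => [&& 0 < y.1, y.1 < m & P y.1]) w -> comm m a w.
Proof.
move=> HP; elim: w => [|[i b] w IH] /=; first by move=> _; exact: comm_nil.
case/andP=> /and3P [H1 H2 H3] Hw.
rewrite -cat1s; apply: comm_catr; last exact: IH.
case: b; first exact: HP.
have -> : [:: (i, false)] = winv [:: (i, true)] by [].
by apply: comm_winv; [rewrite /valid /= H1 H2 | exact: HP].
Qed.

Add Parametric Morphism m x : (cons x) with signature beq m ==> beq m as cons_mor.
Proof. move=> u v H; exact: (beq_cat (beq_refl m [:: x]) H). Qed.

Lemma bpre m u v w t : beq m u v -> beq m (v ++ w) t -> beq m (u ++ w) t.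
Proof. by move=> H1 H2; rewrite H1. Qed.

Lemma comm_far m i j : 0 < i -> 0 < j -> i < m -> j < m ->
  (i.+1 < j) || (j.+1 < i) -> comm m [:: (i, true)] [:: (j, true)].
Proof.
move=> Hi Hj Him Hjm /orP [H|H]; first exact: beq_comm.
by apply: comm_sym; apply: beq_comm.
Qed.

Lemma comm_farw m i w : 0 < i -> i < m ->
  all (fun j => [&& 0 < j, j < m & (i.+1 < j) || (j.+1 < i)]) w ->
  comm m [:: (i, true)] [seq (j, true) | j <- w].
Proof.
move=> Hi Him Hw.
apply: (@comm_gen _ _ (fun j => (i.+1 < j) || (j.+1 < i))).
  by move=> j Hj Hjm Hf; apply: comm_far.
by rewrite all_map.
Qed.

Definition dec lo len : bword := [seq (j, true) | j <- rev (iota lo len)].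
Definition inc lo len : bword := [seq (j, true) | j <- iota lo len].

Lemma decS lo len : dec lo len.+1 = (lo + len, true) :: dec lo len.
Proof. by rewrite /dec -addn1 iotaD rev_cat. Qed.

Lemma decSl lo len : dec lo len.+1 = dec lo.+1 len ++ [:: (lo, true)].
Proof. by rewrite /dec /= rev_cons map_rcons cats1. Qed.

Lemma incS lo len : inc lo len.+1 = (lo, true) :: inc lo.+1 len.
Proof. by []. Qed.

Lemma comm_dec m i lo len : 0 < i -> i < m -> 0 < lo -> lo + len <= m ->
  (i.+1 < lo) || (lo + len < i) -> comm m [:: (i, true)] (dec lo len).
Proof.
move=> Hi Him Hlo Hm Hf; apply: comm_farw => //.
rewrite all_rev; apply/allP => j; rewrite mem_iota => Hj.
apply/and3P; split; lia.
Qed.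

Lemma comm_inc m i lo len : 0 < i -> i < m -> 0 < lo -> lo + len <= m ->
  (i.+1 < lo) || (lo + len < i) -> comm m [:: (i, true)] (inc lo len).
Proof.
move=> Hi Him Hlo Hm Hf; apply: comm_farw => //.
apply/allP => j; rewrite mem_iota => Hj.
apply/and3P; split; lia.
Qed.

Lemma decA m len lo j : 0 < lo -> lo <= j -> j.+1 < lo + len -> lo + len <= m ->
  beq m ((j, true) :: dec lo len) (dec lo len ++ [:: (j.+1, true)]).
Proof.
elim: len => [|len IH] Hlo Hj Hjl Hm; first lia.
rewrite decS.
have [Hlt|Hge] := ltnP j.+1 (lo + len).
  apply: (@bpre _ [:: (j, true); (lo + len, true)] [:: (lo + len, true); (j, true)]).
    apply: comm_far; lia.
  rewrite /= IH //; [reflexivity | lia].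
have Hl : len = (j - lo).+1 by lia.
move: Hl IH => -> _; rewrite decS.
have -> : lo + (j - lo).+1 = j.+1 by lia.
have -> : lo + (j - lo) = j by lia.
apply: (@bpre _ [:: (j, true); (j.+1, true); (j, true)] [:: (j.+1, true); (j, true); (j.+1, true)]).
  apply: beq_braid; lia.
rewrite /=.
have H := @comm_dec m j.+1 lo (j - lo).
rewrite -[(j.+1,true) :: dec lo (j - lo)]/([:: (j.+1, true)] ++ dec lo (j - lo)) H; try lia.
reflexivity.
Qed.

Lemma incA m len lo j : 0 < lo -> lo <= j -> j.+1 < lo + len -> lo + len <= m ->
  beq m ((j.+1, true) :: inc lo len) (inc lo len ++ [:: (j, true)]).
Proof.
elim: len lo => [|len IH] lo Hlo Hj Hjl Hm; first lia.
rewrite incS.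
have [Hlt|Hge] := ltnP lo j.
  apply: (@bpre _ [:: (j.+1, true); (lo, true)] [:: (lo, true); (j.+1, true)]).
    apply: comm_far; lia.
  (rewrite /= IH //; first reflexivity); lia.
have Hl : lo = j by lia.
move: Hl Hlo Hj Hjl Hm IH => -> Hlo Hj Hjl Hm _.
case: len Hjl Hm => [|len] Hjl Hm; first lia.
rewrite incS.
apply: (@bpre _ [:: (j.+1, true); (j, true); (j.+1, true)] [:: (j, true); (j.+1, true); (j, true)]).
  symmetry; apply: beq_braid; lia.
rewrite /=.
have H := @comm_inc m j j.+2 len.
rewrite -[(j,true) :: inc j.+2 len]/([:: (j, true)] ++ inc j.+2 len) H; try lia.
reflexivity.
Qed.

Arguments dec : simpl never.
Arguments inc : simpl never.

Lemma decB m len lo : 0 < lo -> lo + len < m ->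
  beq m ((lo + len, true) :: dec lo len.+1 ++ dec lo.+1 len)
        (dec lo len.+1 ++ dec lo.+1 len ++ [:: (lo, true)]).
Proof.
elim: len lo => [|len IH] lo Hlo Hm.
  rewrite /dec /= addn0; reflexivity.
rewrite (decSl lo len.+1).
have IH' := IH lo.+1 (ltn0Sn _) (ltac:(lia)).
rewrite addSnnS in IH'.
move: IH'; set F := dec lo.+1 len.+1; set E := dec lo.+2 len => IH'.
have HF : F = E ++ [:: (lo.+1, true)] by rewrite /F /E decSl.
have HE : comm m [:: (lo,true)] E by apply: comm_dec; lia.
have Hb : beq m [:: (lo,true); (lo.+1,true); (lo,true)] [:: (lo.+1,true); (lo,true); (lo.+1,true)].
  apply: beq_braid; lia.
symmetry.
transitivity (F ++ E ++ [:: (lo,true); (lo.+1,true); (lo,true)]).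
  rewrite -!catA {2}HF -!catA (catA [:: (lo,true)] E) HE -!catA; reflexivity.
transitivity (F ++ E ++ [:: (lo.+1,true); (lo,true); (lo.+1,true)]).
  rewrite Hb; reflexivity.
transitivity (((lo + len.+1, true) :: F ++ E) ++ [:: (lo,true); (lo.+1,true)]).
  have -> : F ++ E ++ [:: (lo.+1,true); (lo,true); (lo.+1,true)] =
     (F ++ E ++ [:: (lo.+1,true)]) ++ [:: (lo,true); (lo.+1,true)] by rewrite -!catA.
  rewrite -IH'; reflexivity.
rewrite HF -!cat_cons -!catA.
have -> : [:: (lo, true); (lo.+1, true)] = [:: (lo, true)] ++ [:: (lo.+1, true)] by [].
rewrite (catA [:: (lo,true)] E) HE -!catA; reflexivity.
Qed.

Definition DD n k := dec k (n - k).+1.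

Lemma Delta_eq n : Delta n = flatten [seq DD n k | k <- iota 1 n].
Proof. by []. Qed.

Lemma pass n c a j : 0 < a -> a <= j -> j + c <= n ->
  beq n.+1 (flatten [seq DD n k | k <- iota a c] ++ [:: (j + c, true)])
           ((j, true) :: flatten [seq DD n k | k <- iota a c]).
Proof.
elim: c a j => [|c IH] a j Ha Haj Hjc.
  rewrite /= addn0; reflexivity.
rewrite /= -catA -addSnnS IH; [|lia|lia|lia].
have H : beq n.+1 ((j, true) :: DD n a) (DD n a ++ [:: (j.+1, true)]).
  apply: decA; lia.
symmetry; transitivity (((j,true) :: DD n a) ++ flatten [seq DD n k | k <- iota a.+1 c]).
  reflexivity.
rewrite H -catA; reflexivity.
Qed.

Lemma all_DD n c a : 0 < a -> (0 < c -> a + c <= n.+1) ->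
  all (fun y : letter => [&& 0 < y.1, y.1 < n.+1 & a <= y.1]) (flatten [seq DD n k | k <- iota a c]).
Proof.
elim: c a => [|c IH] a Ha Hac //=.
rewrite all_cat; apply/andP; split.
  rewrite /DD /dec all_map all_rev; apply/allP => j; rewrite mem_iota /= => Hj.
  apply/and3P; split; lia.
apply: sub_all (IH a.+1 (ltn0Sn _) (ltac:(lia))) => y /and3P [H1 H2 H3].
apply/and3P; split; lia.
Qed.

Lemma tail_split n i : i <= n ->
  flatten [seq DD n k | k <- iota i.+1 (n - i)] =
  dec i.+1 (n - i) ++ flatten [seq DD n k | k <- iota i.+2 (n - i).-1].
Proof.
move=> Hi; case E: (n - i) => [|l] //=.
by rewrite /DD (_ : n - i.+1 = l) //; lia.
Qed.

Lemma iota_split n i : 1 <= i <= n -> iota 1 n = iota 1 i.-1 ++ i :: iota i.+1 (n - i).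
Proof.
move=> Hi; rewrite -{1}(_ : i.-1 + (n - i).+1 = n); last lia.
by rewrite iotaD (_ : 1 + i.-1 = i) //; lia.
Qed.

Lemma DeltaL n i : 1 <= i <= n ->
  beq n.+1 (Delta n ++ [:: (i, true)]) ((n.+1 - i, true) :: Delta n).
Proof.
move=> Hi.
rewrite Delta_eq (iota_split Hi) map_cat flatten_cat /= tail_split; last lia.
set A := flatten [seq DD n k | k <- iota 1 i.-1].
set R := flatten [seq DD n k | k <- iota i.+2 (n - i).-1].
have Hc : comm n.+1 [:: (i, true)] R.
  apply: (@comm_gen _ _ (fun j => i.+1 < j)).
    move=> j Hj Hjm Hij; apply: comm_far => //; lia.
  apply: sub_all (@all_DD n (n - i).-1 i.+2 (ltn0Sn i.+1) (ltac:(lia))) => y /and3P [H1 H2 H3].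
  apply/and3P; split => //.
have Hb := @decB n.+1 (n - i) i (ltac:(lia)) (ltac:(lia)).
rewrite (_ : i + (n - i) = n) in Hb; last lia.
have Hp := @pass n i.-1 1 (n.+1 - i) (ltn0Sn 0) (ltac:(lia)) (ltac:(lia)).
rewrite (_ : n.+1 - i + i.-1 = n) in Hp; last lia.
rewrite -!catA.
transitivity (A ++ DD n i ++ dec i.+1 (n - i) ++ [:: (i, true)] ++ R).
  rewrite -Hc; reflexivity.
transitivity (A ++ ((n, true) :: DD n i ++ dec i.+1 (n - i)) ++ R).
  rewrite /DD Hb -!catA; reflexivity.
transitivity ((A ++ [:: (n, true)]) ++ DD n i ++ dec i.+1 (n - i) ++ R).
  rewrite -!catA /= -!catA; reflexivity.
rewrite -/A in Hp; rewrite Hp; reflexivity.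
Qed.

Lemma c1_comm n i : 1 <= i <= n -> comm n.+1 (c1 n) [:: (i, true)].
Proof.
move=> Hi; rewrite /comm /c1 -catA DeltaL //.
transitivity ((Delta n ++ [:: (n.+1 - i, true)]) ++ Delta n).
  rewrite -catA; reflexivity.
rewrite DeltaL; last lia.
rewrite (_ : n.+1 - (n.+1 - i) = i); last lia.
reflexivity.
Qed.

Lemma c3_eq n : c3 n = inc 1 n ++ dec 1 n.
Proof. by []. Qed.

Lemma c3_comm n j : 1 <= j < n -> comm n.+1 (c3 n) [:: (j.+1, true)].
Proof.
move=> Hj; rewrite /comm c3_eq; symmetry.
have H1 : beq n.+1 ((j.+1, true) :: inc 1 n) (inc 1 n ++ [:: (j, true)]).
  apply: incA; lia.
have H2 : beq n.+1 ((j, true) :: dec 1 n) (dec 1 n ++ [:: (j.+1, true)]).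
  apply: decA; lia.
transitivity (((j.+1, true) :: inc 1 n) ++ dec 1 n); first reflexivity.
rewrite H1.
transitivity (inc 1 n ++ ((j, true) :: dec 1 n)); first by rewrite -catA; reflexivity.
rewrite H2 catA; reflexivity.
Qed.

Lemma winv_delta n : winv (delta n) = [seq (i, false) | i <- iota 1 n].
Proof.
rewrite /winv /delta !map_rev revK -map_comp; by [].
Qed.

Lemma xelt_c2 n p : 1 <= n -> beq n.+1 (xelt n p) (c2 n p).
Proof.
move=> Hn; rewrite /xelt /c2 winv_delta.
case: n Hn => [//|l] _ /=.
rewrite subn1 /=.
have Hf : beq l.+2 [:: (1, true); (1, false)] [::] by apply: (@beq_free _ (1,true)).
transitivity (shift p ++ [:: (1, true); (1, false)] ++ [seq (i, false) | i <- iota 2 l]).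
  reflexivity.
rewrite Hf; reflexivity.
Qed.

Lemma valid_c1 n : valid n.+1 (c1 n).
Proof.
rewrite /valid /c1 all_cat andbb Delta_eq.
apply: sub_all (@all_DD n n 1 (ltn0Sn 0) (ltac:(lia))) => y /and3P [H1 H2 H3].
by rewrite H1 H2.
Qed.

Lemma valid_shift n p : valid n p -> valid n.+1 (shift p).
Proof.
rewrite /valid /shift all_map => H; apply: sub_all H => y /= /andP [H1 H2].
lia.
Qed.

Lemma valid_c2 n p : valid n p -> valid n.+1 (c2 n p).
Proof.
move=> Hp; move: (valid_shift Hp); rewrite /valid /c2 all_cat => -> /=; rewrite all_map.
apply/allP => i; rewrite mem_iota /= => H; apply/andP; split; lia.
Qed.

Lemma valid_c3 n : valid n.+1 (c3 n).
Proof.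
rewrite /valid c3_eq /inc /dec all_cat !all_map all_rev andbb.
apply/allP => i; rewrite mem_iota /= => H; apply/andP; split; lia.
Qed.

Lemma valid_xelt n p : 1 <= n -> valid n p -> valid n.+1 (xelt n p).
Proof.
move=> Hn Hp; move: (valid_shift Hp); rewrite /xelt /valid !all_cat => -> /=.
rewrite -/(valid n.+1 _) valid_winv /valid /delta all_map all_rev.
rewrite andbT; apply/andP; split; first lia.
apply/allP => i; rewrite mem_iota /= => H; apply/andP; split; lia.
Qed.

Lemma c1_comm_all n w : valid n.+1 w -> comm n.+1 (c1 n) w.
Proof.
move=> Hw; apply: (@comm_gen _ _ predT).
  move=> i H1 H2 _; apply: c1_comm; lia.
by apply: sub_all Hw => y /andP [-> ->].
Qed.

Lemma c3_c2 n p : valid n p -> comm n.+1 (c3 n) (c2 n p).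
Proof.
move=> Hp; apply: (@comm_gen _ _ (fun j => 1 < j)).
  move=> i H1 H2 H3; have -> : i = i.-1.+1 by lia.
  apply: c3_comm; lia.
rewrite /c2 all_cat /shift !all_map; apply/andP; split.
  apply: sub_all Hp => y /= /andP [H1 H2].
apply/andP; split; lia.
apply/allP => i; rewrite mem_iota /= => H; apply/and3P; split; lia.
Qed.

Definition ev (gens : seq bword) (y : letter) : bword :=
  if y.2 then nth [::] gens y.1 else winv (nth [::] gens y.1).

Lemma geval_cons gens y u : geval gens (y :: u) = ev gens y ++ geval gens u.
Proof. by []. Qed.

Lemma comm_geval_r m gens a : (forall g, g \in gens -> comm m a g) ->
  all (valid m) gens -> forall v, gen_word gens v -> comm m a (geval gens v).
Proof.
move=> Hg Hv; elim=> [|y v IH]; first by move=> _; exact: comm_nil.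
case/andP => Hy Hw; rewrite geval_cons; apply: comm_catr; last exact: IH.
have Hin : nth [::] gens y.1 \in gens := mem_nth _ Hy.
rewrite /ev; case: y.2; first exact: Hg.
apply: comm_winv; [exact: (allP Hv) | exact: Hg].
Qed.

Definition habel m gens := forall u v, gen_word gens u -> gen_word gens v ->
  comm m (geval gens u) (geval gens v).

Lemma comm_geval m gens : (forall g h, g \in gens -> h \in gens -> comm m g h) ->
  all (valid m) gens -> habel m gens.
Proof.
move=> Hg Hv; elim=> [|y u IH] v; first by move=> _ _; apply: comm_sym; exact: comm_nil.
case/andP => Hy Hu Hw; rewrite geval_cons; apply: comm_catl; last exact: IH.
have Hin : nth [::] gens y.1 \in gens := mem_nth _ Hy.
rewrite /ev; case: y.2.
  apply: comm_geval_r => // h Hh; exact: Hg.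
apply: comm_sym; apply: comm_winv; first exact: (allP Hv).
apply: comm_sym; apply: comm_geval_r => // h Hh; exact: Hg.
Qed.

Lemma gen_word_filter gens (P : pred letter) u : gen_word gens u -> gen_word gens (filter P u).
Proof.
move=> Hu; apply/allP => z; rewrite mem_filter => /andP [_ Hz]; exact: (allP Hu).
Qed.

Lemma geval_filter m gens (P : pred letter) u : habel m gens -> gen_word gens u ->
  beq m (geval gens u) (geval gens (filter P u) ++ geval gens (filter (predC P) u)).
Proof.
move=> Hab; elim: u => [|y u IH]; first by move=> _; reflexivity.
move=> Hyu; have Hu : gen_word gens u by case/andP: Hyu.
rewrite /= ; case Py: (P y) => /=.
  rewrite !geval_cons IH // -catA; reflexivity.
rewrite !geval_cons IH // catA.
have H := Hab [:: y] (filter P u) (ltac:(by case/andP: Hyu => H1 _; rewrite /gen_word /= H1)) (gen_word_filter P Hu).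
rewrite /comm geval_cons /= cats0 in H.
rewrite H -catA; reflexivity.
Qed.

Fixpoint nfs (gens : seq bword) (ss : seq letter) (u : seq letter) : bword :=
  if ss is s :: ss' then geval gens (filter (pred1 s) u) ++ nfs gens ss' (filter (predC (pred1 s)) u)
  else geval gens u.

Lemma nfs_beq m gens ss u : habel m gens -> gen_word gens u -> beq m (geval gens u) (nfs gens ss u).
Proof.
move=> Hab; elim: ss u => [|s ss IH] u Hu /=; first reflexivity.
rewrite (geval_filter (pred1 s) Hab Hu) (IH (filter (predC (pred1 s)) u)); first reflexivity.
exact: gen_word_filter.
Qed.

Fixpoint cnts (ss : seq letter) (u : seq letter) : seq nat :=
  if ss is s :: ss' then count (pred1 s) u :: cnts ss' (filter (predC (pred1 s)) u) else [::].

Fixpoint NFc (gens : seq bword) (ss : seq letter) (cs : seq nat) : bword :=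
  match ss, cs with
  | s :: ss', c :: cs' => geval gens (nseq c s) ++ NFc gens ss' cs'
  | _, _ => [::]
  end.

Lemma filter_pred1_nseq (s : letter) u : filter (pred1 s) u = nseq (count (pred1 s) u) s.
Proof.
elim: u => [|y u IH] //=; case: eqP => [->|_] /=; by rewrite IH.
Qed.

Lemma nfs_NFc gens ss u : all (fun y => y \in ss) u -> nfs gens ss u = NFc gens ss (cnts ss u).
Proof.
elim: ss u => [|s ss IH] u Hu /=; first by case: u Hu.
rewrite filter_pred1_nseq IH //.
apply/allP => z; rewrite mem_filter /= => /andP [Hzs Hz].
by move: (allP Hu z Hz); rewrite inE (negbTE Hzs).
Qed.

Lemma cnts_bound ss u r : size u <= r -> all (fun c => c <= r) (cnts ss u).
Proof.
elim: ss u => [|s ss IH] u Hu //=; apply/andP; split.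
  exact: leq_trans (count_size _ _) Hu.
apply: IH; rewrite size_filter; exact: leq_trans (count_size _ _) Hu.
Qed.

Lemma size_cnts ss u : size (cnts ss u) = size ss.
Proof. by elim: ss u => [|s ss IH] u //=; rewrite IH. Qed.

Fixpoint tuples r k : seq (seq nat) :=
  if k is k'.+1 then [seq i :: t | i <- iota 0 r.+1, t <- tuples r k'] else [:: [::]].

Lemma size_tuples r k : size (tuples r k) = r.+1 ^ k.
Proof.
elim: k => [|k IH] //.
change (size [seq i :: t | i <- iota 0 r.+1, t <- tuples r k] = r.+1 ^ k.+1).
by rewrite size_allpairs size_iota IH expnS.
Qed.

Lemma mem_tuples r cs : all (fun c => c <= r) cs -> cs \in tuples r (size cs).
Proof.
elim: cs => [|c cs IH]; first by rewrite inE.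
case/andP => Hc Hcs.
change (c :: cs \in [seq i :: t | i <- iota 0 r.+1, t <- tuples r (size cs)]).
apply: allpairs_f; last exact: IH.
by rewrite mem_iota; lia.
Qed.

Definition ss6 : seq letter := [:: (0,true); (0,false); (1,true); (1,false); (2,true); (2,false)].

Lemma growth3 m (g1 g2 g3 : bword) : habel m [:: g1; g2; g3] -> poly_growth m [:: g1; g2; g3].
Proof.
move=> Hab; exists 1, 6 => r.
exists [seq NFc [:: g1; g2; g3] ss6 cs | cs <- tuples r 6]; split.
  by rewrite size_map size_tuples mul1n.
move=> u Hu Hsz; exists (NFc [:: g1; g2; g3] ss6 (cnts ss6 u)).
  apply: map_f; have := mem_tuples (cnts_bound ss6 Hsz); by rewrite size_cnts.
rewrite -nfs_NFc; first exact: nfs_beq.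
apply/allP => -[k b] /(allP Hu) /= Hk.
by case: k Hk => [|[|[|k]]] // _; case: b.
Qed.

Theorem proposition3 (n : nat) (p : bword) :
  2 <= n -> valid n p ->
  [/\ in_centralizer n.+1 (xelt n p) (c1 n),
      in_centralizer n.+1 (xelt n p) (c2 n p),
      in_centralizer n.+1 (xelt n p) (c3 n),
      subgroup_abelian n.+1 [:: c1 n; c2 n p; c3 n]
    & poly_growth n.+1 [:: c1 n; c2 n p; c3 n]].
Proof.
move=> Hn Hp.
have Hx := @valid_xelt n p (ltac:(lia)) Hp.
have Hxc := @xelt_c2 n p (ltac:(lia)).
have Hrefl : forall a, comm n.+1 a a by move=> a; rewrite /comm; reflexivity.
have Hab : habel n.+1 [:: c1 n; c2 n p; c3 n].
  apply: comm_geval; last by rewrite /= valid_c1 valid_c2 // valid_c3.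
  move=> g h; rewrite !inE => /or3P [] /eqP -> /or3P [] /eqP ->;
    try exact: Hrefl;
    try exact: c1_comm_all valid_c1;
    try exact: c1_comm_all (valid_c2 Hp);
    try exact: c1_comm_all (valid_c3 n);
    try exact: comm_sym (c1_comm_all (valid_c2 Hp));
    try exact: comm_sym (c1_comm_all (valid_c3 n));
    try exact: c3_c2 Hp;
    try exact: comm_sym (c3_c2 Hp).
split.
- split; [exact: valid_c1 | exact: c1_comm_all].
- split; [exact: valid_c2 | apply: comm_beq Hxc (Hrefl _)].
- split; [exact: valid_c3 | apply: comm_beq Hxc (c3_c2 Hp)].
- exact: Hab.
- exact: growth3.
Qed.
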